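(* If a monoid $M$ is the limit of an inductive system of sofic monoids, then $M$ is sofic.
   Context: An inductive system of monoids $(M_i,\psi_{ji})$ consists of a directed set $I$, monoids $M_i$ ($i\in I$), and monoid morphisms $\psi_{ji}\colon M_i\to M_j$ for $i\le j$ with $\psi_{ii}=\mathrm{Id}_{M_i}$ and $\psi_{kj}\circ\psi_{ji}=\psi_{ki}$ for $i\le j\le k$. Its limit is the quotient of the disjoint union $\coprod_i M_i$ by the relation $x_i\sim x_j$ ($x_i\in M_i$, $x_j\in M_j$) iff there is $\ell\ge i,j$ with $\psi_{\ell i}(x_i)=\psi_{\ell j}(x_j)$, with multiplication $[x_i][y_j]=[\psi_{\ell i}(x_i)\psi_{\ell j}(y_j)]$ for any $\ell\ge i,j$. For a non-empty finite set $X$, $\mathrm{Map}(X)$ is the monoid of all maps $X\to X$ under composition (identity $\mathrm{Id}_X$) with the Hamming metric $d_X(f,g)=|\{x\in X : f(x)\ne g(x)\}|/|X|$. For a monoid $M$, finite $K\subset M$ and $\varepsilon,\alpha>0$, a map $\varphi\colon M\to\mathrm{Map}(X)$ is a $(K,\varepsilon)$-morphism if $d_X(\varphi(k_1k_2),\varphi(k_1)\varphi(k_2))\le\varepsilon$ for all $k_1,k_2\in K$ and $d_X(\varphi(1_M),\mathrm{Id}_X)\le\varepsilon$; it is $(K,\alpha)$-injective if $d_X(\varphi(k_1),\varphi(k_2))\ge\alpha$ for all distinct $k_1,k_2\in K$. $M$ is sofic if for every finite $K\subset M$ and every $\varepsilon>0$ there exist a non-empty finite set $X$ and a $(K,1-\varepsilon)$-injective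 $(K,\varepsilon)$-morphism $\varphi\colon M\to\mathrm{Map}(X)$. *)

(* Defs.v *)
From Stdlib Require Import Reals.
From HB Require Import structures.
From mathcomp Require Import all_boot.

Set Implicit Arguments.
Unset Strict Implicit.
Unset Printing Implicit Defensive.

Local Open Scope group_scope.

Definition directed_set (I : Type) (le : I -> I -> Prop) : Prop :=
  inhabited I /\
  (forall i, le i i) /\
  (forall i j k, le i j -> le j k -> le i k) /\
  (forall i j, exists k, le i k /\ le j k).

(* (M_i, psi_ji) is an inductive system over (I, le).  The connecting map
   psi_ji is [psi i j : M i -> M j]; it is only constrained for i <= j. *)
Definition inductive_system (I : Type) (le : I -> I -> Prop)
    (M : I -> monoidType) (psi : forall i j : I, M i -> M j) : Prop :=
  directed_set le /\
  (forall i j, le i j -> monoid_morphism (psi i j)) /\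
  (forall i (x : M i), psi i i x = x) /\
  (forall i j k, le i j -> le j k -> forall x : M i,
      psi j k (psi i j x) = psi i k x).

Definition lim_rel (I : Type) (le : I -> I -> Prop)
    (M : I -> monoidType) (psi : forall i j : I, M i -> M j)
    (a b : {i : I & M i}) : Prop :=
  exists l, le (projT1 a) l /\ le (projT1 b) l /\
            psi (projT1 a) l (projT2 a) = psi (projT1 b) l (projT2 b).

(* [L] is (isomorphic to) the limit of the system: there is a surjection [q]
   from the disjoint union onto [L] whose fibres are exactly the classes of
   [lim_rel], such that [q] transports the limit multiplication
   [x_i][y_j] = [psi_li x_i * psi_lj y_j] (any l >= i, j) and unit [1_{M_i}]
   to those of [L]. *)
Definition is_limit (I : Type) (le : I -> I -> Prop)
    (M : I -> monoidType) (psi : forall i j : I, M i -> M j)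
    (L : monoidType) : Prop :=
  exists q : {i : I & M i} -> L,
    (forall y : L, exists a, q a = y) /\
    (forall a b, q a = q b <-> lim_rel le psi a b) /\
    (forall i (x : M i) j (y : M j) l, le i l -> le j l ->
        q (existT _ i x) * q (existT _ j y)
        = q (existT _ l (psi i l x * psi j l y))) /\
    (forall i, q (existT (fun k => M k) i (1%g : M i)) = 1%g).

Definition hamming (X : finType) (f g : X -> X) : R :=
  Rdiv (INR #|[set x | f x != g x]|) (INR #|X|).

Definition is_KE_morphism (M : monoidType) (K : seq M) (eps : R)
    (X : finType) (phi : M -> (X -> X)) : Prop :=
  (forall k1 k2, k1 \in K -> k2 \in K ->
      Rle (hamming (phi (k1 * k2)) (fun x => phi k1 (phi k2 x))) eps) /\
  Rle (hamming (phi 1%g) id) eps.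

Definition is_Kalpha_injective (M : monoidType) (K : seq M) (alpha : R)
    (X : finType) (phi : M -> (X -> X)) : Prop :=
  forall k1 k2, k1 \in K -> k2 \in K -> k1 != k2 ->
    Rle alpha (hamming (phi k1) (phi k2)).

(* Finite subsets K of M are represented by finite sequences. *)
Definition sofic (M : monoidType) : Prop :=
  forall (K : seq M) (eps : R), Rlt 0 eps ->
    exists (X : finType) (phi : M -> (X -> X)),
      (0 < #|X|)%N /\
      is_Kalpha_injective K (Rminus 1 eps) phi /\
      is_KE_morphism K eps phi.

(* Main.v *)
Require Import Defs.
From Stdlib Require Import Reals ClassicalEpsilon Classical.
From HB Require Import structures.
From mathcomp Require Import all_boot.

Set Implicit Arguments.
Unset Strict Implicit.
Unset Printing Implicit Defensive.
Local Open Scope group_scope.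

Lemma in_In (T : eqType) (x : T) (s : seq T) : x \in s -> List.In x s.
Proof. elim: s => //= y s IH; rewrite inE => /orP [/eqP ->|/IH]; auto. Qed.

Lemma common_bound (I J : Type) (le : I -> I -> Prop) (P : J -> I -> Prop) :
  directed_set le ->
  (forall j, exists u, P j u) ->
  (forall j u v, P j u -> le u v -> P j v) ->
  forall js : list J, exists u, forall j, List.In j js -> P j u.
Proof.
move=> [[i0] [_ [_ dir]]] sat up; elim=> [|j js [u Hu]].
  by exists i0.
have [v Hv] := sat j. have [w [uw vw]] := dir u v.
exists w => k /= [<-|Hk]; [exact: up Hv vw | exact: up (Hu k Hk) uw].
Qed.

Theorem proposition3p10 (I : Type) (le : I -> I -> Prop)
    (Mi : I -> monoidType) (psi : forall i j : I, Mi i -> Mi j)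
    (M : monoidType) :
  inductive_system le psi ->
  (forall i, sofic (Mi i)) ->
  is_limit le psi M ->
  sofic M.
Proof.
move=> [dirI [morph [psi_id psi_comp]]] sofI [q [qsurj [qeq [qmul q1]]]].
have [_ [lerefl [letrans dir]]] := dirI.
pose Q := fun u (x : Mi u) => q (existT _ u x).
have push : forall u v (x : Mi u), le u v -> Q v (psi u v x) = Q u x.
  move=> u v x uv; rewrite /Q; apply/qeq; exists v => /=; split; first exact: lerefl.
  by split => //; rewrite psi_id.
have Qmul : forall u (x y : Mi u), Q u (x * y) = Q u x * Q u y.
  by move=> u x y; rewrite /Q (qmul u x u y u (lerefl u) (lerefl u)) !psi_id.
move=> K eps eps0.
have [l Hl] : exists l, forall k, List.In k K -> exists x : Mi l, Q l x = k.
  apply: (common_bound (le := le) (P := fun k u => exists x : Mi u, Q u x = k)) => //.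
    by move=> k; case: (qsurj k) => [[i x] <-]; exists i, x.
  by move=> k u v [x <-] uv; exists (psi u v x); exact: push.
pose y := fun m => epsilon (inhabits (1 : Mi l)) (fun x => Q l x = m).
have Hy : forall k, k \in K -> Q l (y k) = k.
  by move=> k hk; exact: (epsilon_spec _ (fun x => Q l x = k) (Hl k (in_In hk))).
pose S := [seq y k | k <- K] ++ [seq y a * y b | a <- K, b <- K] ++ [:: 1].
have [l' Hl'] : exists l', forall j, List.In j ((1, 1) :: [seq (a, b) | a <- S, b <- S]) ->
    le l l' /\ (Q l j.1 = Q l j.2 -> psi l l' j.1 = psi l l' j.2).
  apply: (common_bound (le := le)
    (P := fun (j : Mi l * Mi l) u => le l u /\ (Q l j.1 = Q l j.2 -> psi l u j.1 = psi l u j.2))) => //.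
    move=> [a b] /=; case: (classic (Q l a = Q l b)) => h.
      have [l0 [h1 [h2 h3]]] := (proj1 (qeq _ _) h).
      by exists l0; split.
    by exists l; split => // /h.
  move=> [a b] u v /= [lu h] uv; split; first exact: letrans lu uv.
  by move=> e; rewrite -(psi_comp l u v lu uv a) -(psi_comp l u v lu uv b) (h e).
have [ll' _] := Hl' (1, 1) (or_introl erefl).
have HS : forall a b, a \in S -> b \in S -> Q l a = Q l b -> psi l l' a = psi l l' b.
  move=> a b ha hb.
  have [_ H] := Hl' (a, b) (or_intror (in_In (allpairs_f pair ha hb))).
  exact: H.
pose f := psi l l'.
have [f1 fM] := morph l l' ll'.
pose S' := map f S.
have Qp : forall x, Q l' (f x) = Q l x by move=> x; apply: push.
have Inj : forall z1 z2, z1 \in S' -> z2 \in S' -> Q l' z1 = Q l' z2 -> z1 = z2.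
  move=> z1 z2 /mapP [a ha ->] /mapP [b hb ->]; rewrite !Qp; exact: HS.
pose s := fun m => epsilon (inhabits (1 : Mi l')) (fun z => z \in S' /\ Q l' z = m).
have Hs : forall z, z \in S' -> s (Q l' z) = z.
  move=> z hz; have [h1 h2] := epsilon_spec (inhabits (1 : Mi l'))
     (fun w => w \in S' /\ Q l' w = Q l' z) (ex_intro _ z (conj hz erefl)).
  exact: Inj.
have yS : forall k, k \in K -> y k \in S.
  by move=> k hk; rewrite mem_cat map_f.
have sk : forall k, k \in K -> s k = f (y k).
  move=> k hk; rewrite -{1}(Hy k hk) -Qp Hs //; exact: map_f (yS k hk).
have skk : forall k1 k2, k1 \in K -> k2 \in K -> s (k1 * k2) = f (y k1) * f (y k2).
  move=> k1 k2 h1 h2.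
  rewrite -{1}(Hy k1 h1) -{1}(Hy k2 h2) -Qmul -Qp Hs ?fM //.
  apply: map_f; rewrite mem_cat orbC mem_cat.
  by rewrite (allpairs_f (fun a b => y a * y b) h1 h2).
have s1 : s 1 = 1.
  rewrite -{1}(q1 l') -/(Q l' 1) Hs //; rewrite -f1; apply: map_f.
  by rewrite !mem_cat mem_seq1 eqxx !orbT.
have [X [phi' [HX [Hinj Hmor]]]] := sofI l' S' eps eps0.
have fS : forall k, k \in K -> f (y k) \in S' by move=> k hk; apply: map_f; exact: yS.
exists X, (fun m => phi' (s m)); split => //; split.
  move=> k1 k2 h1 h2 ne; rewrite (sk k1 h1) (sk k2 h2); apply: Hinj; try exact: fS.
  apply: contra ne => /eqP e; apply/eqP.
  by rewrite -(Hy k1 h1) -(Hy k2 h2) -!Qp e.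
split; last by rewrite s1; exact: Hmor.2.
move=> k1 k2 h1 h2; rewrite (skk k1 k2 h1 h2) (sk k1 h1) (sk k2 h2).
by apply: Hmor.1; exact: fS.
Qed.
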